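(* Let $\Omega\subset\mathbb{R}^d$, $T_{\text{final}}>0$, and let $s=(s_1,\dots,s_{d_s})^\top$, $s_j:\Omega\times[0,T_{\text{final}})\to\mathcal{S}_j\subset\mathbb{R}$, be a (sufficiently smooth) solution of $\partial s/\partial t=f(s)$ with $f$ a differentiable nonlinear function (possibly involving spatial derivatives); $\mathcal{S}=\mathcal{S}_1\times\cdots\times\mathcal{S}_{d_s}$. Let $\mathcal{T}$ be a quadratic lifting and $\mathcal{T}^\dagger$ a reverse lifting map (context). Let $x_1,\dots,x_n$ be grid points, $\bar{\mathbf{s}}(t)$ with $\bar{\mathbf{s}}_{(j-1)n+l}(t)=s_j(x_l,t)$, $\bar{\mathbf{w}}(t)=\mathbf{T}(\bar{\mathbf{s}}(t))$. Suppose $\frac{d\mathbf{s}}{dt}=\mathbf{f}(\mathbf{s})$ ($\mathbf{f}$ Lipschitz) and $\frac{d\mathbf{w}}{dt}=\mathbf{A}\mathbf{w}+\mathbf{H}(\mathbf{w}\otimes\mathbf{w})$ ($\mathbf{A}\in\mathbb{R}^{nd_w\times nd_w}$, $\mathbf{H}\in\mathbb{R}^{nd_w\times n^2d_w^2}$) are consistent order-$p$ discretizations of $\partial s/\partial t=f(s)$ and $\partial w/\partial t=a(w)+h(w)$ respectively, and that $\mathbf{J}$ is Lipschitz. Let $t_1,\dots,t_K$ be times, $\bar{\mathbf{w}}_k=\bar{\mathbf{w}}(t_k)$, $\mathbf{W}=[\bar{\mathbf{w}}_1,\dots,\bar{\mathbf{w}}_K]\in\mathbb{R}^{nd_w\times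 K}$ with singular values $\sigma_1\ge\sigma_2\ge\cdots$, $\mathbf{U}_r\in\mathbb{R}^{nd_w\times r}$ its leading $r$ left singular vectors, $\mathbf{P}_r=\mathbf{U}_r\mathbf{U}_r^\top$, $\hat{\mathbf{W}}=\mathbf{U}_r^\top\mathbf{W}=[\hat{\mathbf{w}}_1,\dots,\hat{\mathbf{w}}_K]$, and $\hat{\mathbf{W}}'=[\hat{\mathbf{w}}_1',\dots,\hat{\mathbf{w}}_K']$ with $\hat{\mathbf{w}}_k'=\mathbf{U}_r^\top\mathbf{J}(\mathbf{T}^\dagger(\mathbf{P}_r\bar{\mathbf{w}}_k))\,\mathbf{f}(\mathbf{T}^\dagger(\mathbf{P}_r\bar{\mathbf{w}}_k))$. Then there exist constants $C_0,C_1,C_2\ge0$ such that $$\min_{\hat{\mathbf{A}}\in\mathbb{R}^{r\times r},\,\hat{\mathbf{H}}\in\mathbb{R}^{r\times r^2}}\frac1K\Big\|\hat{\mathbf{W}}^\top\hat{\mathbf{A}}^\top+(\hat{\mathbf{W}}\otimes\hat{\mathbf{W}})^\top\hat{\mathbf{H}}^\top-\hat{\mathbf{W}}'^\top\Big\|_F^2\le\big(C_0n^{\frac12-p}+(C_1+C_2)\varepsilon\big)^2,$$ where $\varepsilon^2=\sum_{i=r+1}^{nd_w}\sigma_i^2$.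
   Context: Quadratic lifting: a map $\mathcal{T}:\mathcal{S}\to\mathcal{W}\subset\mathbb{R}^{d_w}$, $d_w\ge d_s$, differentiable in $s$ with Jacobian $\mathcal{J}(s)$ satisfying $\sup_{s\in\mathcal{S}}\|\mathcal{J}(s)\|\le c$, such that $w=\mathcal{T}(s)$ satisfies $\partial w/\partial t=a(w)+h(w)$ with each component $a_j$ linear and $h_j$ quadratic (possibly involving spatial derivatives). Reverse lifting map: $\mathcal{T}^\dagger:\mathcal{W}\to\mathcal{S}$, differentiable with bounded derivative, with $\mathcal{T}^\dagger(\mathcal{T}(s))=s$ for all $s\in\mathcal{S}$. $\mathbf{T}:\mathbb{R}^{nd_s}\to\mathbb{R}^{nd_w}$ applies $\mathcal{T}$ node-wise (output index $(j-1)n+l$ is $\mathcal{T}_j$ of the state at $x_l$); $\mathbf{J}(\mathbf{s})\in\mathbb{R}^{nd_w\times nd_s}$ its Jacobian; $\mathbf{T}^\dagger$ applies $\mathcal{T}^\dagger$ node-wise (assumed well-defined at the projected states). Consistent order-$p$ discretization of the original PDE: there is $c_s>0$ independent of $n$ with $|\mathbf{f}_{(j-1)n+l}(\bar{\mathbf{s}}(t))-f_j(s(x,t))|_{x=x_l}|\le c_s n^{-p}$ for all $t,j,l$. Of the lifted PDE: there is $c_w>0$ independent of $n$ with $|\mathbf{A}_{(j-1)n+l,:}\bar{\mathbf{w}}+\mathbf{H}_{(j-1)n+l,:}(\bar{\mathbf{w}}\otimes\bar{\mathbf{w}})-(a_j(w)+h_j(w))|_{x=x_l}|\le c_w n^{-p}$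 for all $t$, $j=1,\dots,d_w$, $l=1,\dots,n$. Column-wise Kronecker product: for $\mathbf{b}\in\mathbb{R}^m$, $\mathbf{b}\otimes\mathbf{b}=(b_1^2,b_1b_2,\dots,b_1b_m,b_2b_1,\dots,b_m^2)^\top$, and for $\mathbf{B}=[\mathbf{b}_1,\dots,\mathbf{b}_K]$, $\mathbf{B}\otimes\mathbf{B}=[\mathbf{b}_1\otimes\mathbf{b}_1,\dots,\mathbf{b}_K\otimes\mathbf{b}_K]$. *)

(* Defs.v *)
From HB Require Import structures.
From mathcomp Require Import all_boot all_order all_algebra.
From mathcomp Require Import all_classical all_reals all_analysis.
Set Implicit Arguments. Unset Strict Implicit. Unset Printing Implicit Defensive.
Import Order.TTheory GRing.Theory Num.Theory.
Import numFieldNormedType.Exports.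
Local Open Scope classical_set_scope.
Local Open Scope ring_scope.

Section Defs.
Variable R : realType.

Definition vnorm m (v : 'cV[R]_m) : R := Num.sqrt (\sum_(i < m) v i 0 ^+ 2).

Definition frob2 m k (M : 'M[R]_(m, k)) : R := \sum_(i < m) \sum_(j < k) M i j ^+ 2.

(* b (x) b for a column vector b: entry of index mxvec_index i i' is b_i b_i' *)
Definition kron_vec m (b : 'cV[R]_m) : 'cV[R]_(m * m) := (mxvec (b *m b^T))^T.

Definition kron_col m k (B : 'M[R]_(m, k)) : 'M[R]_(m * m, k) :=
  \matrix_(q, j) kron_vec (col j B) q 0.

(* Discrete vectors in R^(m n) with entry (j-1)n+l (0-based: mxvec_index j l)
   equal to component j at grid node l. node v l is the state at node l. *)
Definition node m n (v : 'cV[R]_(m * n)) (l : 'I_n) : 'cV[R]_m :=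
  col l (vec_mx v^T).

Definition assemble m n (F : 'I_n -> 'cV[R]_m) : 'cV[R]_(m * n) :=
  (mxvec (\matrix_(j, l) F l j 0))^T.

Definition nodewise a b n (G : 'cV[R]_a -> 'cV[R]_b) (v : 'cV[R]_(a * n))
  : 'cV[R]_(b * n) := assemble (fun l => G (node v l)).

(* Jacobian of the node-wise map v |-> nodewise G v, where Jac is the Jacobian
   of G: block-diagonal in the nodes. *)
Definition nodewise_jac a b n (Jac : 'cV[R]_a -> 'M[R]_(b, a))
  (v : 'cV[R]_(a * n)) : 'M[R]_(b * n, a * n) :=
  \matrix_(q, q') \sum_(j < b) \sum_(i < a) \sum_(l < n)
     ((q == mxvec_index j l) && (q' == mxvec_index i l))%:R
       * Jac (node v l) j i.

Definition inS m (S : 'I_m -> set R) (v : 'cV[R]_m) : Prop :=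
  forall j, S j (v j 0).

(* linear and quadratic operators on fields X -> R^m (possibly involving
   spatial derivatives: no structure beyond (bi)linearity is imposed) *)
Definition lin_op (X : Type) m (L : (X -> 'cV[R]_m) -> X -> R) : Prop :=
  forall (al : R) u v,
    L (fun y => al *: u y + v y) = (fun y => al * L u y + L v y).

Definition quad_op (X : Type) m (Q : (X -> 'cV[R]_m) -> X -> R) : Prop :=
  exists B : (X -> 'cV[R]_m) -> (X -> 'cV[R]_m) -> X -> R,
    (forall v, lin_op (fun u => B u v)) /\ (forall u, lin_op (fun v => B u v)) /\
    (forall u, Q u = B u u).

Definition is_svd N K (W : 'M[R]_(N, K)) (U : 'M[R]_N) (sg : nat -> R) (V : 'M[R]_K) : Prop :=
  U^T *m U = 1%:M /\ V^T *m V = 1%:M /\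
  (forall i, 0 <= sg i) /\ (forall i j, (i <= j)%N -> sg j <= sg i) /\
  (forall i, (K <= i)%N -> sg i = 0) /\
  W = U *m (\matrix_(i, k) if (i : nat) == (k : nat) then sg i else 0) *m V^T.

Definition lead_cols N r (hr : (r <= N)%N) (U : 'M[R]_N) : 'M[R]_(N, r) :=
  \matrix_(q, j) U q (widen_ord hr j).

End Defs.

(* Main.v *)
Require Import Defs.
From HB Require Import structures.
From mathcomp Require Import all_boot all_order all_algebra.
From mathcomp Require Import all_classical all_reals all_analysis.
From mathcomp Require Import ring lra.
Import Order.TTheory GRing.Theory Num.Theory.
Import numFieldNormedType.Exports.
Local Open Scope classical_set_scope.
Local Open Scope ring_scope.

Section Aux.
Variable R : realType.

Lemma mxn_entry m k (M : 'M[R]_(m,k)) i j : `|M i j| <= `|M|.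
Proof.
rewrite [leRHS]/Num.Def.normr/= mx_normrE; apply/bigmax_geP; right => /=.
by exists (i, j).
Qed.

Lemma mxn_le m k (M : 'M[R]_(m,k)) E : 0 <= E -> (forall i j, `|M i j| <= E) -> `|M| <= E.
Proof.
move=> E0 H; rewrite [leLHS]/Num.Def.normr/= mx_normrE.
by apply: bigmax_le => // -[i j] _; apply: H.
Qed.

Lemma vnorm_ge0 m (v : 'cV[R]_m) : 0 <= vnorm v.
Proof. exact: sqrtr_ge0. Qed.

Lemma vnorm_sq m (v : 'cV[R]_m) : vnorm v ^+ 2 = \sum_i v i 0 ^+ 2.
Proof. by rewrite /vnorm sqr_sqrtr // sumr_ge0 // => i _; rewrite sqr_ge0. Qed.

Lemma entry_le_vnorm m (v : 'cV[R]_m) i : `|v i 0| <= vnorm v.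
Proof.
rewrite /vnorm -sqrtr_sqr ler_sqrt ?sumr_ge0 // => [|j _]; last by rewrite sqr_ge0.
by rewrite (bigD1 i) //= lerDl sumr_ge0 // => j _; rewrite sqr_ge0.
Qed.

Lemma mxn_le_vnorm m (v : 'cV[R]_m) : `|v| <= vnorm v.
Proof.
by apply: mxn_le; [exact: vnorm_ge0| move=> i j; rewrite (ord1 j); exact: entry_le_vnorm].
Qed.

Lemma vnorm_le_entries m (v : 'cV[R]_m) E : 0 <= E ->
  (forall i, `|v i 0| <= E) -> vnorm v <= Num.sqrt m%:R * E.
Proof.
move=> E0 H; rewrite /vnorm -(ger0_norm E0) -sqrtr_sqr -sqrtrM ?ler0n //.
rewrite ler_sqrt; last by rewrite mulr_ge0 ?ler0n ?sqr_ge0.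
apply: (@le_trans _ _ (\sum_(i < m) E ^+ 2)).
  apply: ler_sum => i _; rewrite -real_normK ?num_real // !expr2.
  by apply: ler_pM => //; exact: H.
by rewrite sumr_const card_ord mulr_natl.
Qed.

End Aux.

Section Aux2.
Variable R : realType.

Lemma mxn_mul m k (M : 'M[R]_(m,k)) (z : 'cV[R]_k) : `|M *m z| <= k%:R * `|M| * `|z|.
Proof.
apply: mxn_le; first by rewrite !mulr_ge0 ?ler0n.
move=> i j; rewrite mxE; apply: (le_trans (ler_norm_sum _ _ _)).
apply: (@le_trans _ _ (\sum_(l < k) (`|M| * `|z|))).
  by apply: ler_sum => l _; rewrite normrM ler_pM ?mxn_entry.
by rewrite sumr_const card_ord -[X in X <= _]mulr_natl mulrA.
Qed.

Lemma vnorm_sqT m (v : 'cV[R]_m) : vnorm v ^+ 2 = (v^T *m v) 0 0.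
Proof. by rewrite vnorm_sq mxE; apply: eq_bigr => i _; rewrite mxE expr2. Qed.

Lemma vnorm_orth N (U : 'M[R]_N) (x : 'cV[R]_N) : U^T *m U = 1%:M ->
  vnorm (U^T *m x) = vnorm x.
Proof.
move=> /mulmx1C UU; apply/eqP; rewrite -(eqrXn2 (n:=2)) ?vnorm_ge0 //.
by rewrite !vnorm_sqT trmx_mul trmxK mulmxA -(mulmxA x^T) UU mulmx1.
Qed.

Lemma vnorm_lead N r (hr : (r <= N)%N) (U : 'M[R]_N) (x : 'cV[R]_N) :
  U^T *m U = 1%:M -> vnorm ((lead_cols hr U)^T *m x) <= vnorm x.
Proof.
move=> UU; rewrite -(@vnorm_orth _ _ x UU).
rewrite -(ler_pXn2r (n:=2)) ?nnegrE ?vnorm_ge0 // !vnorm_sq.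
have -> : \sum_(i < r) ((lead_cols hr U)^T *m x) i 0 ^+ 2 =
    \sum_(i < N | (i < r)%N) (U^T *m x) i 0 ^+ 2.
  rewrite (big_ord_narrow hr); apply: eq_bigr => i _; rewrite !mxE.
  by congr (_ ^+ 2); apply: eq_bigr => q _; rewrite !mxE.
rewrite [leRHS](bigID (fun i : 'I_N => (i < r)%N)) /= lerDl.
by apply: sumr_ge0 => i _; rewrite sqr_ge0.
Qed.

End Aux2.

Section Aux3.
Variable R : realType.

Lemma nodeE m n (v : 'cV[R]_(m * n)) l i j : node v l i j = v (mxvec_index i l) 0.
Proof. by rewrite /node !mxE. Qed.

Lemma assembleE m n (F : 'I_n -> 'cV[R]_m) j l k :
  assemble F (mxvec_index j l) k = F l j 0.
Proof. by rewrite /assemble (ord1 k) mxE mxvecE mxE. Qed.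

Lemma node_assemble m n (F : 'I_n -> 'cV[R]_m) l : node (assemble F) l = F l.
Proof. by apply/matrixP => i j; rewrite nodeE assembleE (ord1 j). Qed.

Lemma nodewiseE a b n (G : 'cV[R]_a -> 'cV[R]_b) (v : 'cV[R]_(a * n)) j l k :
  nodewise G v (mxvec_index j l) k = G (node v l) j 0.
Proof. by rewrite /nodewise assembleE. Qed.

Lemma nodeB m n (u v : 'cV[R]_(m * n)) l : node (u - v) l = node u l - node v l.
Proof. by apply/matrixP => i j; rewrite /node !mxE. Qed.

Lemma idx_eq m n (i i' : 'I_m) (j j' : 'I_n) :
  (mxvec_index i j == mxvec_index i' j') = (i == i') && (j == j').
Proof.
apply/eqP/andP => [|[/eqP -> /eqP ->] //].
by move/cast_ord_inj/enum_rank_inj => [-> ->].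
Qed.

Lemma jac_entry a b n (Jac : 'cV[R]_a -> 'M[R]_(b, a)) (v : 'cV[R]_(a * n)) j l q :
  nodewise_jac Jac v (mxvec_index j l) q =
  \sum_i (q == mxvec_index i l)%:R * Jac (node v l) j i.
Proof.
rewrite mxE (bigD1 j) //= [X in _ + X]big1 ?addr0; last first.
  move=> j1 /negbTE nj.
  by apply: big1 => i _; apply: big1 => l1 _; rewrite idx_eq eq_sym nj /= mul0r.
apply: eq_bigr => i _; rewrite (bigD1 l) //= [X in _ + X]big1 ?addr0.
  by rewrite idx_eq !eqxx.
move=> l1 /negbTE nl.
by rewrite idx_eq eq_sym nl andbF /= mul0r.
Qed.

Lemma jacE a b n (Jac : 'cV[R]_a -> 'M[R]_(b, a)) (v : 'cV[R]_(a * n))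
   (z : 'cV[R]_(a * n)) j l :
  (nodewise_jac Jac v *m z) (mxvec_index j l) 0 = (Jac (node v l) *m node z l) j 0.
Proof.
rewrite !mxE.
under eq_bigr do rewrite jac_entry big_distrl /=.
rewrite exchange_big /=; apply: eq_bigr => i _.
rewrite (bigD1 (mxvec_index i l)) //= [X in _ + X]big1 ?addr0.
  by rewrite eqxx mul1r nodeE.
by move=> q /negbTE nq; rewrite nq mul0r mul0r.
Qed.

End Aux3.

Section Aux4.
Variable R : realType.

Lemma comp_deriv m k (g : R -> 'M[R]_(m, k)) t i j :
  differentiable g t -> is_derive t 1 (fun tau => g tau i j) ('d g t 1 i j).
Proof.
move=> dg.
have dg1 : derivable g t 1 by exact: diff_derivable.
have di : derivable (fun tau => g tau i j) t 1 by move/derivable_mxP : dg1; apply.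
apply: DeriveDef => //.
by rewrite -deriveE // derive_mx // mxE.
Qed.

Lemma chain_comp ds dw (sig : R -> 'cV[R]_ds) (Tl : 'cV[R]_ds -> 'cV[R]_dw)
  (Jm : 'M[R]_(dw, ds)) (df : 'I_ds -> R) (t : R) (j : 'I_dw) :
  (forall i, is_derive t 1 (fun tau => sig tau i 0) (df i)) ->
  differentiable Tl (sig t) -> (forall u, 'd Tl (sig t) u = Jm *m u) ->
  'D_1 (fun tau => Tl (sig tau) j 0) t = (Jm *m \col_i df i) j 0.
Proof.
move=> Hd dT dTE.
have ds1 : derivable sig t 1.
  by apply/derivable_mxP => i j'; rewrite (ord1 j'); case: (Hd i).
have Ds : 'D_1 sig t = \col_i df i.
  rewrite derive_mx //; apply/matrixP => i j'; rewrite !mxE (ord1 j').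
  by case: (Hd i).
have dsig : differentiable sig t by apply/derivable1_diffP.
have dc : differentiable (Tl \o sig) t by apply: differentiable_comp.
have := @comp_deriv _ _ _ t j 0 dc => /= H.
rewrite (@derive_val _ _ _ _ _ _ _ H).
by rewrite diff_comp //= dTE -(deriveE _ dsig) Ds.
Qed.

Lemma Td_lip ds dw (Td : 'cV[R]_dw -> 'cV[R]_ds) cd x y i :
  (forall u, differentiable Td u /\ forall v, vnorm ('d Td u v) <= cd * vnorm v) ->
  `|Td x i 0 - Td y i 0| <= `|cd| * vnorm (x - y).
Proof.
move=> HT.
pose line : R -> 'cV[R]_dw := ( *:%R^~ (x - y)) + cst y.
have dl tau : is_diff tau line ( *:%R^~ (x - y) + 0).
  by apply: is_diffD.
have dg tau : differentiable (Td \o line) tau.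
  by apply: differentiable_comp => //; case: (HT (line tau)).
have dgE tau : 'd (Td \o line) tau 1 = 'd Td (line tau) (x - y).
  have dlE : 'd line tau = ( *:%R^~ (x - y) + 0) :> (R -> _) by apply: diff_val.
  rewrite diff_comp //=; last by case: (HT (line tau)).
  rewrite dlE; congr ('d Td (line tau) _).
  by rewrite /GRing.add /= /cst addr0 scale1r.
pose phi := fun tau => (Td \o line) tau i 0.
have Dphi (tau : R) : is_derive tau 1 phi ('d (Td \o line) tau 1 i 0).
  exact: comp_deriv.
have cont : {within `[0, 1], continuous phi}.
  apply: continuous_subspaceT => tau.
  apply: differentiable_continuous; apply/derivable1_diffP.
  by case: (Dphi tau).
have [c _ Hc] := @MVT_segment R phi (fun tau => 'd (Td \o line) tau 1 i 0) 0 1 ler01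
   (fun tau _ => Dphi tau) cont.
have : phi 1 - phi 0 = Td x i 0 - Td y i 0.
  have l1 : line 1 = x by rewrite /line /GRing.add /= /cst scale1r subrK.
  have l0 : line 0 = y by rewrite /line /GRing.add /= /cst scale0r add0r.
  by rewrite /phi /= l1 l0.
move=> <-; rewrite Hc subr0 mulr1 dgE.
apply: le_trans; first exact: entry_le_vnorm.
case: (HT (line c)) => _ /(_ (x - y)) H.
apply: (le_trans H); apply: ler_wpM2r; [exact: vnorm_ge0| exact: ler_norm].
Qed.

End Aux4.

Section Aux5.
Variable R : realType.

Lemma frob2_tr m k (M : 'M[R]_(m, k)) : frob2 M = \tr (M *m M^T).
Proof.
rewrite /frob2 /mxtrace; apply: eq_bigr => i _; rewrite mxE.
by apply: eq_bigr => j _; rewrite mxE expr2.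
Qed.

Lemma frob2_orthl m k (U : 'M[R]_m) (M : 'M[R]_(m, k)) : U^T *m U = 1%:M ->
  frob2 (U *m M) = frob2 M.
Proof.
move=> UU; rewrite !frob2_tr trmx_mul -mulmxA mxtrace_mulC -!mulmxA UU mulmx1.
by [].
Qed.

Lemma frob2_orthr m k (V : 'M[R]_k) (M : 'M[R]_(m, k)) : V^T *m V = 1%:M ->
  frob2 (M *m V^T) = frob2 M.
Proof.
move=> VV; rewrite !frob2_tr trmx_mul trmxK -mulmxA (mulmxA V^T) VV mul1mx.
by [].
Qed.

Lemma frob2_ge0 m k (M : 'M[R]_(m, k)) : 0 <= frob2 M.
Proof. by apply: sumr_ge0 => i _; apply: sumr_ge0 => j _; rewrite sqr_ge0. Qed.

Lemma frob_proj N K (W : 'M[R]_(N, K)) U sg V r (hr : (r <= N)%N) :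
  is_svd W U sg V ->
  frob2 (W - lead_cols hr U *m (lead_cols hr U)^T *m W) =
  \sum_(i < N | (r <= i)%N) sg i ^+ 2.
Proof.
move=> [UU [VV [sg0 [_ [sgK WE]]]]].
set D := \matrix_(i, k) _ in WE.
pose P0 : 'M[R]_(N, r) := \matrix_(i, j) (i == widen_ord hr j)%:R.
have UrE : lead_cols hr U = U *m P0.
  apply/matrixP => q j; rewrite !mxE (bigD1 (widen_ord hr j)) //= big1 ?addr0.
    by rewrite mxE eqxx mulr1.
  by move=> i /negbTE ni; rewrite mxE ni mulr0.
pose E : 'M[R]_N := \matrix_(i, i') ((i == i') && (r <= i)%N)%:R.
have GE : P0 *m P0^T = 1%:M - E.
  apply/matrixP => i i'; rewrite !mxE.
  case: (ltnP i r) => [ir|ri].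
    rewrite (bigD1 (Ordinal ir)) //= big1 ?addr0.
      rewrite !mxE /= andbF subr0.
      have -> : (i == widen_ord hr (Ordinal ir)) = true by apply/eqP/val_inj.
      by rewrite mul1r eq_sym.
    move=> j nj; rewrite !mxE.
    have -> : (i == widen_ord hr j) = false.
      apply/negbTE; apply: contra nj => /eqP ij; apply/eqP/val_inj => /=.
      by move: (congr1 val ij) => /= ->.
    by rewrite mul0r.
  rewrite big1 => [|j _]; last first.
    rewrite !mxE.
    have -> : (i == widen_ord hr j) = false.
      apply/negbTE/eqP => ij; move: (ltn_ord j); rewrite -[X in (X < _)%N]/(widen_ord hr j : nat).
      by rewrite -ij ltnNge ri.
    by rewrite mul0r.
  by rewrite andbT; case: (i == i'); rewrite ?subrr ?subr0.
have -> : W - lead_cols hr U *m (lead_cols hr U)^T *m W = U *m (E *m D) *m V^T.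
  have H1 : lead_cols hr U *m (lead_cols hr U)^T = U *m (1%:M - E) *m U^T.
    by rewrite UrE trmx_mul !mulmxA -GE !mulmxA.
  rewrite H1 WE.
  have -> : U *m (1%:M - E) *m U^T *m (U *m D *m V^T) = U *m ((1%:M - E) *m D) *m V^T.
    by rewrite !mulmxA -(mulmxA _ U^T U) UU mulmx1.
  rewrite -mulmxBl -mulmxBr mulmxBl mul1mx.
  by rewrite opprB addrC subrK.
rewrite frob2_orthr // frob2_orthl //.
rewrite /frob2 [RHS]big_mkcond /=; apply: eq_bigr => i _.
have ED k : (E *m D) i k = ((r <= i)%N)%:R * D i k.
  rewrite mxE (bigD1 i) //= big1 ?addr0 ?mxE ?eqxx //.
  by move=> i' /negbTE ni; rewrite mxE eq_sym ni mul0r.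
under eq_bigr do rewrite ED.
case: (leqP r i) => ri; last first.
  by apply: big1 => k _; rewrite mul0r expr0n.
case: (ltnP i K) => iK.
  rewrite (bigD1 (Ordinal iK)) //= big1 ?addr0.
    by rewrite mul1r mxE eqxx.
  move=> k nk; rewrite mul1r mxE.
  have -> : (nat_of_ord i == nat_of_ord k) = false.
    apply/negbTE; apply: contra nk => /eqP ik; apply/eqP/val_inj => /=.
    by rewrite ik.
  by rewrite expr0n.
rewrite sgK // expr0n /=; apply: big1 => k _; rewrite mul1r mxE.
have -> : (nat_of_ord i == nat_of_ord k) = false.
  by apply/negbTE/eqP => ik; move: (ltn_ord k); rewrite -ik ltnNge iK.
by rewrite expr0n.
Qed.

End Aux5.

Section Aux6.
Variable R : realType.

Lemma kron_mul N r (Ur : 'M[R]_(N, r)) :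
  exists Kr : 'M[R]_(N * N, r * r), forall b, kron_vec (Ur *m b) = Kr *m kron_vec b.
Proof.
exists (lin_mx (mulmxr Ur^T \o mulmx Ur))^T => b.
rewrite /kron_vec -trmx_mul mul_vec_lin /= trmx_mul !mulmxA.
by [].
Qed.

Lemma col_kron m k (B : 'M[R]_(m, k)) j : col j (kron_col B) = kron_vec (col j B).
Proof. by apply/matrixP => q i; rewrite (ord1 i) !mxE. Qed.

End Aux6.

Section Aux7.
Variable R : realType.

Lemma vnorm_mxn m (v : 'cV[R]_m) : vnorm v <= Num.sqrt m%:R * `|v|.
Proof. by apply: vnorm_le_entries => // i; exact: mxn_entry. Qed.

Lemma vnorm_add2 m (u v : 'cV[R]_m) :
  vnorm (u + v) ^+ 2 <= 2 * vnorm u ^+ 2 + 2 * vnorm v ^+ 2.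
Proof.
rewrite !vnorm_sq !mulr_sumr -big_split /=; apply: ler_sum => i _.
rewrite mxE; set x := u i 0; set y := v i 0.
have : 0 <= (x - y) ^+ 2 by rewrite sqr_ge0.
rewrite sqrrB sqrrD => H.
lra.
Qed.

Lemma frob2_cols m k (X : 'M[R]_(m, k)) : frob2 X^T = \sum_j vnorm (col j X) ^+ 2.
Proof.
rewrite /frob2 /=; apply: eq_bigr => j _.
by rewrite vnorm_sq; apply: eq_bigr => i _; rewrite !mxE.
Qed.

Lemma frob2_cols' m k (X : 'M[R]_(m, k)) : frob2 X = \sum_j vnorm (col j X) ^+ 2.
Proof.
rewrite /frob2 exchange_big /=; apply: eq_bigr => j _.
by rewrite vnorm_sq; apply: eq_bigr => i _; rewrite !mxE.
Qed.

Lemma T3_bound m m' (Js Ju : 'M[R]_(m, m')) (fs fu : 'cV[R]_m') (L1 L2 L3 F E e : R) :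
  0 <= L1 -> 0 <= L2 -> 0 <= L3 -> 0 <= e -> e <= E ->
  (forall z : 'cV[R]_m', `|(Js - Ju) *m z| <= L1 * e * `|z|) ->
  (forall z : 'cV[R]_m', `|Js *m z| <= L2 * `|z|) ->
  `|fs - fu| <= L3 * e -> `|fs| <= F ->
  `|Js *m fs - Ju *m fu| <= (L1 * F + L2 * L3 + L1 * L3 * E) * e.
Proof.
move=> L10 L20 L30 e0 eE H1 H2 H3 H4.
have -> : Js *m fs - Ju *m fu =
   (Js - Ju) *m fs + Js *m (fs - fu) - (Js - Ju) *m (fs - fu).
  rewrite !mulmxBl !mulmxBr.
  move: (Js *m fs) (Ju *m fs) (Js *m fu) (Ju *m fu) => a b c d.
  by apply/matrixP => i j; rewrite !mxE; ring.
apply: (le_trans (ler_normB _ _)); apply: (le_trans (lerD (ler_normD _ _) (lexx _))).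
have h1 := H1 fs; have h2 := H2 (fs - fu); have h3 := H1 (fs - fu).
have n1 : 0 <= `|fs| by [].
have n2 : 0 <= `|fs - fu| by [].
have f1 : L1 * e * `|fs| <= L1 * e * F by rewrite ler_wpM2l ?mulr_ge0.
have f2 : L2 * `|fs - fu| <= L2 * (L3 * e) by rewrite ler_wpM2l.
have f3 : L1 * e * `|fs - fu| <= L1 * e * (L3 * E).
  rewrite ler_wpM2l ?mulr_ge0 //; apply: (le_trans H3); rewrite ler_wpM2l //.
have -> : (L1 * F + L2 * L3 + L1 * L3 * E) * e = L1 * e * F + L2 * (L3 * e) + L1 * e * (L3 * E) by ring.
apply: lerD; first apply: lerD.
- exact: le_trans h1 f1.
- exact: le_trans h2 f2.
- exact: le_trans h3 f3.
Qed.

Lemma kron_diff m (u v : 'cV[R]_m) :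
  `|kron_vec u - kron_vec v| <= (`|u| + `|v|) * `|u - v|.
Proof.
apply: mxn_le; first by rewrite mulr_ge0 ?addr_ge0.
move=> q j; rewrite (ord1 j); case/mxvec_indexP: q => i i'.
rewrite !mxE !mxvecE !mxE !big_ord1 !mxE.
have -> : u i 0 * u i' 0 - v i 0 * v i' 0 = (u i 0 - v i 0) * u i' 0 + v i 0 * (u i' 0 - v i' 0) by ring.
apply: (le_trans (ler_normD _ _)); rewrite !normrM mulrDl.
have e1 := @mxn_entry R _ _ (u - v) i 0; rewrite !mxE in e1.
have e2 := @mxn_entry R _ _ (u - v) i' 0; rewrite !mxE in e2.
have e3 := @mxn_entry R _ _ u i' 0; have e4 := @mxn_entry R _ _ v i 0.
apply: lerD.
  by rewrite mulrC; apply: ler_pM.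
by apply: ler_pM.
Qed.

End Aux7.

Section Aux8.
Variable R : realType.

Lemma subE m k (A B : 'M[R]_(m, k)) i j : (A - B) i j = A i j - B i j.
Proof. by rewrite !mxE. Qed.

Lemma addE m k (A B : 'M[R]_(m, k)) i j : (A + B) i j = A i j + B i j.
Proof. by rewrite !mxE. Qed.

Lemma node_mxn m n (v : 'cV[R]_(m * n)) l : `|node v l| <= `|v|.
Proof. by apply: mxn_le => // i j; rewrite nodeE; exact: mxn_entry. Qed.

Lemma nodewise_lip ds dw n (Td : 'cV[R]_dw -> 'cV[R]_ds) (cd : R) (a b : 'cV[R]_(dw * n)) :
  (forall u, differentiable Td u /\ forall v, vnorm ('d Td u v) <= cd * vnorm v) ->
  `|nodewise Td a - nodewise Td b| <= `|cd| * Num.sqrt dw%:R * `|a - b|.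
Proof.
move=> HT; apply: mxn_le; first by rewrite !mulr_ge0 ?sqrtr_ge0.
move=> q j; rewrite (ord1 j); case/mxvec_indexP: q => i l.
rewrite subE !nodewiseE.
apply: le_trans; first exact: (@Td_lip R _ _ Td cd (node a l) (node b l) i HT).
rewrite -mulrA ler_wpM2l //.
rewrite -nodeB; apply: le_trans; first exact: vnorm_mxn.
rewrite ler_wpM2l ?sqrtr_ge0 //.
exact: node_mxn.
Qed.

Lemma colM m k p (A : 'M[R]_(m, k)) (B : 'M[R]_(k, p)) j : col j (A *m B) = A *m col j B.
Proof. by rewrite !colE mulmxA. Qed.

Lemma colB m k (A B : 'M[R]_(m, k)) j : col j (A - B) = col j A - col j B.
Proof. by apply/matrixP => i i'; rewrite !mxE. Qed.

Lemma colD m k (A B : 'M[R]_(m, k)) j : col j (A + B) = col j A + col j B.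
Proof. by apply/matrixP => i i'; rewrite !mxE. Qed.

Lemma sqrt_split (dw n : nat) (p : R) : (0 < n)%N ->
  Num.sqrt (dw * n)%:R * n%:R `^ (- p) = Num.sqrt dw%:R * n%:R `^ (2^-1 - p).
Proof.
move=> n0; rewrite natrM sqrtrM ?ler0n // -mulrA; congr (_ * _).
rewrite powRD; last by rewrite pnatr_eq0 -lt0n n0 implybT.
by rewrite powR12_sqrt ?ler0n.
Qed.

End Aux8.

Theorem theorem1 (R : realType) (d ds dw : nat) (p c cs cw : R) :
  exists C0 : R, 0 <= C0 /\
  forall (Omega : set 'rV[R]_d) (Tf : R) (S : 'I_ds -> set R)
    (f : 'I_ds -> ('rV[R]_d -> 'cV[R]_ds) -> 'rV[R]_d -> R)
    (s : 'rV[R]_d -> R -> 'cV[R]_ds)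
    (Tl : 'cV[R]_ds -> 'cV[R]_dw) (Jl : 'cV[R]_ds -> 'M[R]_(dw, ds))
    (a h : 'I_dw -> ('rV[R]_d -> 'cV[R]_dw) -> 'rV[R]_d -> R)
    (Td : 'cV[R]_dw -> 'cV[R]_ds) (cd : R),
  0 < Tf ->
  (* s is a solution of ds/dt = f(s) on Omega x [0, Tf), with values in S *)
  (forall y t, Omega y -> 0 <= t < Tf -> inS S (s y t)) ->
  (forall y t (j : 'I_ds), Omega y -> 0 <= t < Tf ->
     is_derive t 1 (fun tau => s y tau j 0) (f j (fun z => s z t) y)) ->
  (* quadratic lifting Tl with Jacobian Jl, sup_S ||Jl|| <= c *)
  (forall v, inS S v -> differentiable Tl v /\ forall u, 'd Tl v u = Jl v *m u) ->
  (forall v, inS S v -> forall u, vnorm (Jl v *m u) <= c * vnorm u) ->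
  (forall j, lin_op (a j)) -> (forall j, quad_op (h j)) ->
  (forall y t (j : 'I_dw), Omega y -> 0 <= t < Tf ->
     is_derive t 1 (fun tau => Tl (s y tau) j 0)
       (a j (fun z => Tl (s z t)) y + h j (fun z => Tl (s z t)) y)) ->
  (* reverse lifting Td: left inverse of Tl on S, differentiable, bounded derivative *)
  (forall v, inS S v -> Td (Tl v) = v) ->
  (forall u, differentiable Td u /\ forall v, vnorm ('d Td u v) <= cd * vnorm v) ->
  forall (n : nat) (xg : 'I_n -> 'rV[R]_d)
    (fb : 'cV[R]_(ds * n) -> 'cV[R]_(ds * n))
    (A : 'M[R]_(dw * n)) (H : 'M[R]_(dw * n, (dw * n) * (dw * n))),
  (0 < n)%N -> (forall l, Omega (xg l)) ->
  let sbar := fun t => assemble (fun l => s (xg l) t) in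
  let wbar := fun t => nodewise Tl (sbar t) in
  (* bold f Lipschitz, consistent of order p *)
  (exists Lf : R, forall u v, vnorm (fb u - fb v) <= Lf * vnorm (u - v)) ->
  (forall t j l, 0 <= t < Tf ->
     `|fb (sbar t) (mxvec_index j l) 0 - f j (fun z => s z t) (xg l)|
       <= cs * (n%:R) `^ (- p)) ->
  (* A, H consistent of order p *)
  (forall t j l, 0 <= t < Tf ->
     `|(A *m wbar t + H *m kron_vec (wbar t)) (mxvec_index j l) 0
        - (a j (fun z => Tl (s z t)) (xg l) + h j (fun z => Tl (s z t)) (xg l))|
       <= cw * (n%:R) `^ (- p)) ->
  (* bold J Lipschitz *)
  (exists LJ : R, forall u v z,
     vnorm ((nodewise_jac (n:=n) Jl u - nodewise_jac (n:=n) Jl v) *m z)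
       <= LJ * vnorm (u - v) * vnorm z) ->
  forall (K : nat) (tk : 'I_K -> R), (0 < K)%N -> (forall k, 0 <= tk k < Tf) ->
  let W := \matrix_(q, k) wbar (tk k) q 0 in
  exists C1 C2 : R, 0 <= C1 /\ 0 <= C2 /\
  forall (U : 'M[R]_(dw * n)) (sg : nat -> R) (V : 'M[R]_K), is_svd W U sg V ->
  forall (r : nat) (hr : (r <= dw * n)%N),
  let Ur := lead_cols hr U in
  let Pr := Ur *m Ur^T in
  let What := Ur^T *m W in
  let What' := \matrix_(i, k)
      (Ur^T *m (nodewise_jac (n:=n) Jl (nodewise Td (Pr *m col k W))
                *m fb (nodewise Td (Pr *m col k W)))) i 0 in
  let eps := Num.sqrt (\sum_(i < dw * n | (r <= i)%N) sg i ^+ 2) in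
  exists (Ah : 'M[R]_r) (Hh : 'M[R]_(r, r * r)),
    K%:R^-1 * frob2 (What^T *m Ah^T + (kron_col What)^T *m Hh^T - What'^T)
      <= (C0 * (n%:R) `^ (2^-1 - p) + (C1 + C2) * eps) ^+ 2.
Proof.
set B := `|cw| + `|c| * Num.sqrt ds%:R * `|cs|.
have B0 : 0 <= B by rewrite /B addr_ge0 ?mulr_ge0 ?sqrtr_ge0.
exists (2 * Num.sqrt dw%:R * B); split; first by rewrite !mulr_ge0 ?sqrtr_ge0.
move=> Omega Tf S f s Tl Jl a h Td cd Tf0 HS Hs HTl Hc Ha Hh Hw HTd HTdd
  n xg fb A H n0 Hxg sbar wbar [Lf HLf] Hcs Hcw [LJ HLJ] K tk K0 Htk W.
have node_sbar t l : node (sbar t) l = s (xg l) t by rewrite node_assemble.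
have inS_node t l : 0 <= t < Tf -> inS S (node (sbar t) l).
  by move=> ht; rewrite node_sbar; apply: HS.
have TdW t : 0 <= t < Tf -> nodewise Td (wbar t) = sbar t.
  move=> ht; apply/matrixP => q j; rewrite (ord1 j); case/mxvec_indexP: q => i l.
  rewrite nodewiseE /wbar /nodewise node_assemble HTd; last exact: inS_node.
  by rewrite nodeE.
have colW k : col k W = wbar (tk k).
  by apply/matrixP => q j; rewrite (ord1 j) !mxE.
have chain t j l : 0 <= t < Tf ->
  a j (fun z => Tl (s z t)) (xg l) + h j (fun z => Tl (s z t)) (xg l) =
  (Jl (s (xg l) t) *m \col_i f i (fun z => s z t) (xg l)) j 0.
  move=> ht; have Hd := Hw (xg l) t j (Hxg l) ht.
  rewrite -(@derive_val _ _ _ _ _ _ _ Hd).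
  apply: chain_comp.
  - by move=> i; apply: Hs.
  - by case: (HTl (s (xg l) t) (HS _ _ (Hxg l) ht)).
  - by case: (HTl (s (xg l) t) (HS _ _ (Hxg l) ht)).
set np := n%:R `^ (- p).
have np0 : 0 <= np by apply: powR_ge0.
have x1b t q : 0 <= t < Tf ->
  `|(A *m wbar t + H *m kron_vec (wbar t) - nodewise_jac Jl (sbar t) *m fb (sbar t)) q 0|
    <= B * np.
  move=> ht; case/mxvec_indexP: q => j l; rewrite subE jacE node_sbar.
  have h1 := Hcw t j l ht; rewrite chain // in h1.
  set g := (A *m wbar t + H *m kron_vec (wbar t)) (mxvec_index j l) 0 in h1 *.
  set fc := \col_i f i (fun z => s z t) (xg l) in h1 *.
  set v := s (xg l) t in h1 *.
  set nfb := node (fb (sbar t)) l.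
  have -> : g - (Jl v *m nfb) j 0 = (g - (Jl v *m fc) j 0) + (Jl v *m (fc - nfb)) j 0.
    by rewrite mulmxBr subE; ring.
  apply: (le_trans (ler_normD _ _)).
  have -> : B * np = `|cw| * np + `|c| * (Num.sqrt ds%:R * (`|cs| * np)) by rewrite /B; ring.
  apply: lerD.
    by apply: (le_trans h1); rewrite ler_wpM2r // ler_norm.
  apply: le_trans; first exact: entry_le_vnorm.
  apply: (le_trans (Hc v (HS _ _ (Hxg l) ht) _)).
  apply: le_trans; first by apply: ler_wpM2r; [exact: vnorm_ge0 | exact: ler_norm].
  apply: ler_wpM2l => //.
  apply: vnorm_le_entries; first by rewrite mulr_ge0.
  move=> i; rewrite subE mxE nodeE distrC.
  by apply: (le_trans (Hcs t i l ht)); rewrite ler_wpM2r // ler_norm.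
set N := (dw * n)%N.
have sum_ge (F : 'I_K -> R) k : (forall k, 0 <= F k) -> F k <= \sum_k F k.
  by move=> F0; rewrite (bigD1 k) //= lerDl sumr_ge0.
set Mw := \sum_k `|wbar (tk k)|.
have Mw_ge k : `|wbar (tk k)| <= Mw by apply: sum_ge.
have Mw0 : 0 <= Mw by apply: sumr_ge0.
set Fw := Num.sqrt (frob2 W).
have Fw0 : 0 <= Fw by apply: sqrtr_ge0.
set Lt := `|cd| * Num.sqrt dw%:R.
have Lt0 : 0 <= Lt by rewrite mulr_ge0 ?sqrtr_ge0.
set Lf' := `|Lf| * Num.sqrt (ds * n)%:R.
have Lf0 : 0 <= Lf' by rewrite mulr_ge0 ?sqrtr_ge0.
set LJ' := `|LJ| * Num.sqrt (ds * n)%:R * Num.sqrt (ds * n)%:R.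
have LJ0 : 0 <= LJ' by rewrite !mulr_ge0 ?sqrtr_ge0.
set MJ := \sum_k `|nodewise_jac Jl (sbar (tk k))|.
have MJ_ge k : `|nodewise_jac Jl (sbar (tk k))| <= MJ by apply: sum_ge.
have MJ0 : 0 <= MJ by apply: sumr_ge0.
set F0 := \sum_k `|fb (sbar (tk k))|.
have F0_ge k : `|fb (sbar (tk k))| <= F0 by apply: sum_ge.
have F00 : 0 <= F0 by apply: sumr_ge0.
set L2 := (ds * n)%:R * MJ.
have L20 : 0 <= L2 by rewrite mulr_ge0.
set beta := N%:R * `|A| + (N * N)%:R * `|H| * (Mw + Fw + Mw)
   + (LJ' * F0 + L2 * Lf' + LJ' * Lf' * (Lt * Fw)) * Lt.
have beta0 : 0 <= beta by rewrite /beta !(addr_ge0, mulr_ge0).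
exists (2 * Num.sqrt N%:R * beta), 0; split; first by rewrite !mulr_ge0 ?sqrtr_ge0.
split=> //.
move=> U sg V svd r hr Ur Pr What What' eps.
have [Kr HKr] := @kron_mul R _ _ Ur.
exists (Ur^T *m A *m Ur), (Ur^T *m H *m Kr).
set X := Ur^T *m A *m Ur *m What + Ur^T *m H *m Kr *m kron_col What - What'.
have -> : What^T *m (Ur^T *m A *m Ur)^T + (kron_col What)^T *m (Ur^T *m H *m Kr)^T - What'^T = X^T.
  by rewrite /X !linearD /= linearN /= !trmx_mul.
rewrite frob2_cols.
set al := Num.sqrt dw%:R * B * n%:R `^ (2^-1 - p).
have al0 : 0 <= al by rewrite !mulr_ge0 ?sqrtr_ge0 ?powR_ge0.
set del := fun k => vnorm (wbar (tk k) - Pr *m wbar (tk k)).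
have colWP k : col k (W - Pr *m W) = wbar (tk k) - Pr *m wbar (tk k).
  by rewrite colB colM colW.
have delsum : \sum_k del k ^+ 2 = eps ^+ 2.
  rewrite /eps sqr_sqrtr; last by apply: sumr_ge0 => i _; rewrite sqr_ge0.
  rewrite -(@frob_proj R _ _ _ _ _ _ _ hr svd) frob2_cols'.
  by apply: eq_bigr => k _; rewrite colWP.
have [UU _] := svd.
have del_le k : del k <= Fw.
  have h0 := @frob_proj R _ _ W U sg V 0 (leq0n N) svd.
  rewrite thinmx0 !mul0mx subr0 in h0.
  have dk0 : 0 <= del k by apply: vnorm_ge0.
  rewrite /Fw -(ger0_norm dk0) -sqrtr_sqr ler_sqrt ?frob2_ge0 // h0.
  apply: (le_trans (sum_ge (fun k => del k ^+ 2) k _)); first by move=> ?; rewrite sqr_ge0.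
  rewrite delsum /eps sqr_sqrtr; last by apply: sumr_ge0 => i _; rewrite sqr_ge0.
  rewrite [leLHS]big_mkcond [leRHS]big_mkcond /=; apply: ler_sum => i _.
  by case: ifP => _; rewrite ?sqr_ge0 ?lexx.
have key k : vnorm (col k X) ^+ 2 <= 2 * al ^+ 2 + 2 * (Num.sqrt N%:R * beta) ^+ 2 * del k ^+ 2.
  have ht := Htk k.
  set wk := wbar (tk k) in del_le *.
  set pw := Pr *m wk.
  set sk := sbar (tk k).
  set u := nodewise Td pw.
  set Js := nodewise_jac Jl sk.
  set Ju := nodewise_jac Jl u.
  set x1 := A *m wk + H *m kron_vec wk - Js *m fb sk.
  set x2 := (A *m pw + H *m kron_vec pw - Ju *m fb u) - x1.
  have colX : col k X = Ur^T *m (x1 + x2).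
    rewrite addrC subrK /X colB colD !colM col_kron colM colW -/wk.
    have -> : col k What' = Ur^T *m (Ju *m fb u).
      by apply/matrixP => i j; rewrite (ord1 j) !mxE colW.
    rewrite -[Ur^T *m H *m Kr *m _]mulmxA -HKr -[Ur^T *m A *m Ur *m _]mulmxA.
    rewrite !(mulmxA Ur) -/Pr -/pw -!mulmxA.
    by rewrite mulmxBr mulmxDr.
  have v1 : vnorm x1 <= al.
    apply: le_trans; first apply: (@vnorm_le_entries R _ x1 (B * np)).
    - by rewrite mulr_ge0.
    - by move=> q; apply: x1b.
    by rewrite /al mulrCA sqrt_split // mulrCA mulrA.
  set dd := `|wk - pw|.
  have d0 : 0 <= dd by apply: normr_ge0.
  have dle : dd <= del k by apply: mxn_le_vnorm.
  have ddF : dd <= Fw by apply: (le_trans dle).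
  have x2b : `|x2| <= beta * dd.
    have x2E : x2 = A *m (pw - wk) + H *m (kron_vec pw - kron_vec wk)
                    + (Js *m fb sk - Ju *m fb u).
      rewrite /x2 /x1 !mulmxBr.
      move: (A *m pw) (A *m wk) (H *m kron_vec pw) (H *m kron_vec wk)
            (Js *m fb sk) (Ju *m fb u) => a1 a2 a3 a4 a5 a6.
      by apply/matrixP => i j; rewrite !mxE; ring.
    have hA : `|A *m (pw - wk)| <= N%:R * `|A| * dd.
      by apply: le_trans; first exact: mxn_mul; rewrite distrC.
    have hpw : `|pw| <= Mw + Fw.
      have -> : pw = wk - (wk - pw) by rewrite opprB addrC subrK.
      apply: (le_trans (ler_normB _ _)); apply: lerD => //.
      exact: Mw_ge.
    have hH : `|H *m (kron_vec pw - kron_vec wk)| <= (N * N)%:R * `|H| * ((Mw + Fw + Mw) * dd).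
      apply: le_trans; first exact: mxn_mul.
      rewrite ler_wpM2l ?mulr_ge0 //.
      apply: le_trans; first exact: kron_diff.
      rewrite distrC ler_wpM2r //.
      by apply: lerD => //; exact: Mw_ge.
    set e := `|sk - u|.
    have e0 : 0 <= e by apply: normr_ge0.
    have he : e <= Lt * dd.
      by rewrite /e /sk -TdW //; apply: nodewise_lip.
    have hT : `|Js *m fb sk - Ju *m fb u| <= (LJ' * F0 + L2 * Lf' + LJ' * Lf' * (Lt * Fw)) * e.
      apply: T3_bound => //.
      - by apply: (le_trans he); rewrite ler_wpM2l.
      - move=> z; apply: le_trans; first exact: mxn_le_vnorm.
        apply: (le_trans (HLJ _ _ _)).
        have -> : LJ' * e * `|z| = `|LJ| * ((Num.sqrt (ds * n)%:R * e) * (Num.sqrt (ds * n)%:R * `|z|)).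
          by rewrite /LJ'; ring.
        rewrite -mulrA; apply: le_trans.
          by apply: ler_wpM2r; [rewrite mulr_ge0 ?vnorm_ge0 | exact: ler_norm].
        rewrite ler_wpM2l //; apply: ler_pM; rewrite ?vnorm_ge0 //; exact: vnorm_mxn.
      - move=> z; apply: le_trans; first exact: mxn_mul.
        by rewrite /L2 ler_wpM2r // ler_wpM2l // MJ_ge.
      - apply: le_trans; first exact: mxn_le_vnorm.
        apply: (le_trans (HLf _ _)).
        apply: le_trans; first by apply: ler_wpM2r; [exact: vnorm_ge0 | exact: ler_norm].
        rewrite /Lf' -mulrA ler_wpM2l //; exact: vnorm_mxn.
      - exact: F0_ge.
    rewrite x2E; apply: (le_trans (ler_normD _ _)).
    have -> : beta * dd = N%:R * `|A| * dd + (N * N)%:R * `|H| * ((Mw + Fw + Mw) * dd)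
        + (LJ' * F0 + L2 * Lf' + LJ' * Lf' * (Lt * Fw)) * (Lt * dd) by rewrite /beta; ring.
    apply: lerD; last by apply: (le_trans hT); rewrite ler_wpM2l // !(addr_ge0, mulr_ge0).
    by apply: (le_trans (ler_normD _ _)); apply: lerD.
  have v2 : vnorm x2 <= Num.sqrt N%:R * beta * del k.
    apply: le_trans; first exact: vnorm_mxn.
    rewrite -mulrA ler_wpM2l ?sqrtr_ge0 //.
    by apply: (le_trans x2b); rewrite ler_wpM2l.
  rewrite colX.
  apply: (@le_trans _ _ (vnorm (x1 + x2) ^+ 2)).
    by rewrite ler_pXn2r ?nnegrE ?vnorm_ge0 //; apply: vnorm_lead.
  apply: le_trans; first exact: vnorm_add2.
  have hv1 : vnorm x1 ^+ 2 <= al ^+ 2 by rewrite ler_pXn2r ?nnegrE ?vnorm_ge0.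
  have hv2 : vnorm x2 ^+ 2 <= (Num.sqrt N%:R * beta) ^+ 2 * del k ^+ 2.
    rewrite -exprMn ler_pXn2r ?nnegrE ?vnorm_ge0 //.
    by rewrite !mulr_ge0 ?sqrtr_ge0 ?vnorm_ge0.
  lra.
set b := Num.sqrt N%:R * beta.
have b0 : 0 <= b by rewrite mulr_ge0 ?sqrtr_ge0.
have eps0 : 0 <= eps by apply: sqrtr_ge0.
have Kpos : 0 < K%:R :> R by rewrite ltr0n.
apply: (@le_trans _ _ (K%:R^-1 * \sum_k (2 * al ^+ 2 + 2 * b ^+ 2 * del k ^+ 2))).
  by rewrite ler_wpM2l ?invr_ge0 ?ler0n //; apply: ler_sum => k _; apply: key.
rewrite big_split /= -[X in _ + X]mulr_sumr delsum sumr_const card_ord -[2 * al ^+ 2 *+ K]mulr_natr.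
have -> : K%:R^-1 * (2 * al ^+ 2 * K%:R + 2 * b ^+ 2 * eps ^+ 2) =
    2 * al ^+ 2 + K%:R^-1 * (2 * b ^+ 2 * eps ^+ 2).
  by field; rewrite gt_eqF.
have -> : 2 * Num.sqrt dw%:R * B * n%:R `^ (2^-1 - p) = 2 * al by rewrite /al !mulrA.
have hK : K%:R^-1 * (2 * b ^+ 2 * eps ^+ 2) <= 2 * b ^+ 2 * eps ^+ 2.
  apply: ler_piMl; first by rewrite !mulr_ge0 ?sqr_ge0.
  by rewrite invr_le1 ?unitfE ?gt_eqF // ler1n.
have -> : 2 * Num.sqrt N%:R * beta + 0 = 2 * b by rewrite addr0 /b mulrA.
apply: (le_trans (lerD (lexx _) hK)).
have := mulr_ge0 (mulr_ge0 al0 b0) eps0.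
have := sqr_ge0 al; have := sqr_ge0 (b * eps).
nra.
Qed.
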